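(* Let $\mathcal O$ be the suboperad of $\mathrm{CNCB}$ generated by $p:=T_{bbu}$ and $c:=T_{buu}$. Then $\mathcal O$ admits the presentation with generators $p,c$ of arity $2$ and relations $$(c\circ_2 p)\circ_2 c=(c\circ_1 c)\circ_2 p,\qquad (p\circ_2 p)\circ_2 c=(p\circ_1 c)\circ_2 p.$$ That is, $\mathcal O$ is isomorphic, via the morphism sending the generators to $p$ and $c$, to the quotient of the free operad on two binary generators by the operadic congruence generated by these two relations.
   Context: For $n\ge2$, a bicoloured noncrossing configuration (BNC) of size $n$ is a regular polygon with vertices $1,\dots,n+1$ clockwise, together with disjoint sets of blue and red arcs among the arcs $(i,j)$, $1\le i<j\le n+1$. The arcs $(i,i+1)$ are the edges ($i$th edge), $(1,n+1)$ is the base, and the others are diagonals. Coloured arcs are pairwise noncrossing ($(i,j),(k,l)$ cross iff $i<k<j<l$ or $k<i<l<j$), and red arcs are diagonals. There is one BNC of size $1$, a blue segment, which is the unit. The operad $\mathrm{CNCB}$ has the BNCs as elements (arity = size). Its composition $\mathfrak C\circ_i\mathfrak D$ ($\mathfrak C$ of size $n$, $\mathfrak D$ of size $m$) glues the base of $\mathfrak D$ on the $i$th edge of $\mathfrak C$. Arcs $(a,b)$ of $\mathfrak C$ become $(\sigma(a),\sigma(b))$ with $\sigma(v)=v$ for $v\le i$ and $v+m-1$ otherwise, and arcs $(a,b)$ of $\mathfrak D$ become $(a+i-1,b+i-1)$, keeping colours. The exception is the arc $(i,i+m)$, which is red if the $i$th edge of $\mathfrak C$ and the base of $\mathfrak D$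 are both uncoloured, blue if both are blue, and uncoloured otherwise. For $x,y,z\in\{b,u\}$, $T_{xyz}$ denotes the BNC of size $2$ (a triangle with vertices $1,2,3$) whose first edge $(1,2)$ has colour $x$, whose base $(1,3)$ has colour $y$, and whose second edge $(2,3)$ has colour $z$, where $b$ = blue and $u$ = uncoloured. The suboperad generated by a set is the smallest suboperad containing it. *)

(* Defs.v *)
From HB Require Import structures.
From mathcomp Require Import all_boot.
Set Implicit Arguments. Unset Strict Implicit. Unset Printing Implicit Defensive.

Inductive colour := cU | cB | cR.
Definition colour_eqb (x y : colour) : bool :=
  match x, y with cU, cU | cB, cB | cR, cR => true | _, _ => false end.
Lemma colour_eqP : Equality.axiom colour_eqb.
Proof. by case; case; constructor. Qed.
HB.instance Definition _ := hasDecEq.Build colour colour_eqP.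

(** A (candidate) bicoloured noncrossing configuration of size [bsize]:
    vertices are the naturals 1 .. bsize+1, and the colour of the arc (a,b)
    is entry b of row a of the table [btab] (a computable, canonical
    representation; see [mk]).  Only the entries with
    1 <= a < b <= bsize+1 are meaningful; in all configurations built with
    [mk] the other entries are [cU]. *)
Record bnc := BNC { bsize : nat; btab : seq (seq colour) }.

Definition getc (x : bnc) (a b : nat) : colour :=
  nth cU (nth [::] (btab x) a) b.

Definition is_arc (n a b : nat) : bool := [&& 1 <= a, a < b & b <= n.+1].

Definition mk (n : nat) (f : nat -> nat -> colour) : bnc :=
  @BNC n [seq [seq (if is_arc n a b then f a b else cU) | b <- iota 0 n.+2]
         | a <- iota 0 n.+2].

Definition crosses (a b c d : nat) : bool :=
  ((a < c) && (c < b) && (b < d)) || ((c < a) && (a < d) && (d < b)).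

(** Validity of a BNC (the elements of CNCB); recorded for documentation. *)
Definition valid_bnc (x : bnc) : Prop :=
  let n := bsize x in
  [/\ 1 <= n,
      (forall a b, ~~ is_arc n a b -> getc x a b = cU),
      (n = 1 -> getc x 1 2 = cB),
      (forall a b, getc x a b = cR -> (b != a.+1) && ~~ ((a == 1) && (b == n.+1)))
    & (forall a b c d, getc x a b != cU -> getc x c d != cU -> ~~ crosses a b c d)].

Definition unit_bnc : bnc := mk 1 (fun _ _ => cB).

Definition comp (C : bnc) (i : nat) (D : bnc) : bnc :=
  let n := bsize C in
  let m := bsize D in
  let outside v := (v <= i) || (i + m <= v) in
  let unsig v := if v <= i then v else v - (m - 1) in
  mk (n + m - 1) (fun a b =>
    if (a == i) && (b == i + m) then
      match getc C i i.+1, getc D 1 m.+1 with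
      | cU, cU => cR
      | cB, cB => cB
      | _, _ => cU
      end
    else if (i <= a) && (b <= i + m) then getc D (a - i + 1) (b - i + 1)
    else if outside a && outside b then getc C (unsig a) (unsig b)
    else cU).

(** T_xyz: first edge (1,2) coloured x, base (1,3) coloured y,
    second edge (2,3) coloured z. *)
Definition tri (x y z : colour) : bnc :=
  mk 2 (fun a b => if (a == 1) && (b == 2) then x
                   else if (a == 1) && (b == 3) then y else z).

Definition p_bnc : bnc := tri cB cB cU.
Definition c_bnc : bnc := tri cB cU cU.

Inductive gen_sub : bnc -> Prop :=
| gs_unit : gen_sub unit_bnc
| gs_p : gen_sub p_bnc
| gs_c : gen_sub c_bnc
| gs_comp C D i : gen_sub C -> gen_sub D -> 1 <= i <= bsize C ->
                  gen_sub (comp C i D).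

(** The free (nonsymmetric) operad on two binary generators: planar binary
    trees with internal nodes labelled by a generator. *)
Inductive gen := gp | gc.
Inductive tree := Leaf | Node (g : gen) (l r : tree).

Fixpoint arity (t : tree) : nat :=
  match t with Leaf => 1 | Node _ l r => arity l + arity r end.

Fixpoint graft (t : tree) (i : nat) (s : tree) : tree :=
  match t with
  | Leaf => if i == 1 then s else Leaf
  | Node g l r => if i <= arity l then Node g (graft l i s) r
                  else Node g l (graft r (i - arity l) s)
  end.

Definition gtree (g : gen) : tree := Node g Leaf Leaf.
Definition P := gtree gp.
Definition Cg := gtree gc.

Inductive cong : tree -> tree -> Prop :=
| cong_rel1 : cong (graft (graft Cg 2 P) 2 Cg) (graft (graft Cg 1 Cg) 2 P)
| cong_rel2 : cong (graft (graft P 2 P) 2 Cg) (graft (graft P 1 Cg) 2 P)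
| cong_refl t : cong t t
| cong_sym t t' : cong t t' -> cong t' t
| cong_trans t t' t'' : cong t t' -> cong t' t'' -> cong t t''
| cong_comp t t' s s' i : cong t t' -> cong s s' -> 1 <= i <= arity t ->
                          cong (graft t i s) (graft t' i s').

Definition gen_bnc (g : gen) : bnc := if g is gp then p_bnc else c_bnc.

Fixpoint eval (t : tree) : bnc :=
  match t with
  | Leaf => unit_bnc
  | Node g l r => comp (comp (gen_bnc g) 2 (eval r)) 1 (eval l)
  end.

(* Main.v *)
Require Import Defs.
From mathcomp Require Import all_boot zify.
Set Implicit Arguments. Unset Strict Implicit.

Definition J (x y : colour) : colour :=
  match x, y with cU, cU => cR | cB, cB => cB | _, _ => cU end.
Arguments J : simpl never.
Definition gcol (g : gen) := if g is gp then cB else cU.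

Fixpoint col (t : tree) (a b : nat) : colour :=
 match t with
 | Leaf => if (a == 1) && (b == 2) then cB else cU
 | Node g l r =>
   if ~~ is_arc (arity l + arity r) a b then cU
   else if (a == 1) && (b == (arity l + arity r).+1) then gcol g
   else if b <= (arity l).+1 then col l a b
   else if (arity l).+1 <= a then
     (if (a == (arity l).+1) && (b == (arity l + arity r).+1)
      then (if col r 1 (arity r).+1 == cU then cR else cU)
      else col r (a - arity l) (b - arity l))
   else cU
 end.

Definition compf (fC : nat -> nat -> colour) (i m : nat) (fD : nat -> nat -> colour) (a b : nat) :=
 if (a == i) && (b == i + m) then J (fC i i.+1) (fD 1 m.+1)
 else if (i <= a) && (b <= i + m) then fD (a - i + 1) (b - i + 1)
 else if ((a <= i) || (i + m <= a)) && ((b <= i) || (i + m <= b)) then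
   fC (if a <= i then a else a - (m - 1)) (if b <= i then b else b - (m - 1))
 else cU.

Lemma arity_gt0 t : 0 < arity t.
Proof. elim: t => //= g l IHl r IHr; lia. Qed.

Lemma arity_graft t i s : 1 <= i <= arity t -> arity (graft t i s) = arity t + arity s - 1.
Proof.
elim: t i => [|g l IHl r IHr] i /= Hi.
  have -> : i = 1 by lia. by rewrite eqxx; lia.
have := arity_gt0 l; have := arity_gt0 r; have := arity_gt0 s => ? ? ?.
case: ifP => H /=.
  rewrite IHl; lia.
rewrite IHr; lia.
Qed.

Lemma col_off t a b : ~~ is_arc (arity t) a b -> col t a b = cU.
Proof.
case: t => [|g l r] /=.
  rewrite /is_arc; case: ifP => //; lia.
by move=> ->.
Qed.

Lemma col_off' t a b : (a < 1) || (b <= a) || ((arity t).+1 < b) -> col t a b = cU.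
Proof. move=> H; apply: col_off; rewrite /is_arc; lia. Qed.

Lemma base_BU t : (col t 1 (arity t).+1 == cB) || (col t 1 (arity t).+1 == cU).
Proof.
case: t => [|g l r] //=.
have := arity_gt0 l; have := arity_gt0 r => ? ?.
rewrite /is_arc; case: ifP => [|_]; first lia.
by rewrite /= !eqxx; case: g.
Qed.

Lemma getc_mk n f a b : getc (mk n f) a b = if is_arc n a b then f a b else cU.
Proof.
rewrite /getc /mk.
case: (ltnP a n.+2) => Ha.
  rewrite (nth_map 0); last by rewrite size_iota.
  rewrite nth_iota // add0n.
  case: (ltnP b n.+2) => Hb.
    by rewrite (nth_map 0) ?size_iota // nth_iota.
  rewrite nth_default ?size_map ?size_iota //.
  by case: ifP => //; rewrite /is_arc; lia.
rewrite (nth_default [::]) ?size_map ?size_iota // nth_nil.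
by case: ifP => //; rewrite /is_arc; lia.
Qed.

Lemma mk_ext n f g : (forall a b, is_arc n a b -> f a b = g a b) -> mk n f = mk n g.
Proof.
move=> H; rewrite /mk; congr BNC; apply: eq_map => a; apply: eq_map => b.
by case: ifP => // /H ->.
Qed.

Lemma comp_mk C i D : Defs.comp C i D = mk (bsize C + bsize D - 1) (compf (getc C) i (bsize D) (getc D)).
Proof. by []. Qed.

Ltac split1 := match goal with |- context [if ?c then _ else _] =>
  lazymatch c with context[if _ then _ else _] => fail | _ => let E := fresh "E" in case E: c end end.
Lemma ifandE (c1 c2 : bool) T (x y : T) : (if c1 && c2 then x else y) = (if c1 then (if c2 then x else y) else y).
Proof. by case: c1. Qed.
Lemma iforE (c1 c2 : bool) T (x y : T) : (if c1 || c2 then x else y) = (if c1 then x else if c2 then x else y).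
Proof. by case: c1. Qed.
Lemma ifnegE (c : bool) T (x y : T) : (if ~~ c then x else y) = (if c then y else x).
Proof. by case: c. Qed.
Ltac atomize := repeat (first [rewrite ifandE | rewrite iforE | rewrite ifnegE]).
Ltac go := atomize; repeat (split1; try (exfalso; lia)).

Lemma J_base s : J cB (col s 1 (arity s).+1) = col s 1 (arity s).+1.
Proof. by case/orP: (base_BU s) => /eqP ->. Qed.
Lemma colU_eq x y p q p' q' : col x p q = cU -> col y p' q' = cU -> col x p q = col y p' q'.
Proof. by move=> -> ->. Qed.

Lemma colc t x1 x2 y1 y2 : x1 = x2 -> y1 = y2 -> col t x1 y1 = col t x2 y2.
Proof. by move=> -> ->. Qed.
Lemma Jc x1 x2 y1 y2 : x1 = x2 -> y1 = y2 -> J x1 y1 = J x2 y2.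
Proof. by move=> -> ->. Qed.
Ltac refl := match goal with |- ?x = ?x => reflexivity end.
Ltac fc := first [ refl | (apply: colc; lia) | (apply: colU_eq; apply: col_off'; lia)
  | (apply: col_off'; lia) | (symmetry; apply: col_off'; lia) ].
Ltac fcab a b := first [ fc | (case: (posnP b) => [->|?]; fc) | (case: (posnP a) => [->|?]; fc)
  | (case: (posnP a) => [->|?]; case: (posnP b) => [->|?]; fc) ].
Ltac fin a b := lazymatch goal with
 | |- J _ _ = J _ _ => apply: Jc; fcab a b
 | |- J cB _ = _ => rewrite J_base; fcab a b
 | |- _ = J cB _ => rewrite J_base; fcab a b
 | _ => fcab a b end.

Lemma col_graft_leaf s a b : col s a b = compf (col Leaf) 1 (arity s) (col s) a b.
Proof.
have := arity_gt0 s => Hs.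
rewrite /compf /=. go.
all: fin a b.
Qed.

Lemma JcU x : J cU x = if x == cU then cR else cU.
Proof. by case: x. Qed.

Lemma node_left g l r s i a b
  (IH: forall a b, col (graft l i s) a b = compf (col l) i (arity s) (col s) a b)
  (Hi: 1 <= i <= arity l) :
 col (Node g (graft l i s) r) a b = compf (col (Node g l r)) i (arity s) (col s) a b.
Proof.
have := arity_gt0 s; have := arity_gt0 l; have := arity_gt0 r => ? ? ?.
rewrite /= arity_graft // !IH /compf /is_arc /=.
go.
all: fin a b.
Qed.
Lemma node_right g l r s i a b
  (IH: forall a b, col (graft r (i - arity l) s) a b = compf (col r) (i - arity l) (arity s) (col s) a b)
  (Hi: arity l < i <= arity l + arity r) (Hr : 2 <= arity r) :
 col (Node g l (graft r (i - arity l) s)) a b = compf (col (Node g l r)) i (arity s) (col s) a b.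
Proof.
have := arity_gt0 s; have := arity_gt0 l => ? ?.
have Hb : col (graft r (i - arity l) s) 1 (arity (graft r (i - arity l) s)).+1 = col r 1 (arity r).+1.
  rewrite arity_graft; last lia.
  rewrite IH /compf. go. all: try fin a b.
rewrite /= Hb arity_graft; last lia.
rewrite !IH /compf /is_arc /=.
go.
all: fin a b.
Qed.

Lemma node_right_leaf g l s a b :
 col (Node g l s) a b = compf (col (Node g l Leaf)) (arity l).+1 (arity s) (col s) a b.
Proof.
have := arity_gt0 s; have := arity_gt0 l => ? ?.
rewrite /compf /= /is_arc.
go.
all: rewrite ?JcU.
all: go.
all: fin a b.
Qed.

Lemma col_graft t i s a b : 1 <= i <= arity t ->
  col (graft t i s) a b = compf (col t) i (arity s) (col s) a b.
Proof.
elim: t i a b => [|g l IHl r IHr] i a b Hi.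
  have -> : i = 1 by move: Hi => /=; lia.
  by rewrite /= col_graft_leaf.
move: Hi => /= Hi; case: ifP => Hil.
  have Hi' : 1 <= i <= arity l by move: Hil; lia.
  apply: node_left => // a' b'; exact: IHl.
case: r IHr Hi => [|g' l' r'] IHr Hi.
  move: Hi => /= Hi; have -> : i = (arity l).+1 by lia.
  rewrite (_ : (arity l).+1 - arity l = 1); last lia.
  exact: node_right_leaf.
apply: node_right.
- move=> a' b'; apply: IHr; move: Hi => /=; lia.
- move: Hi => /=; lia.
- have := arity_gt0 l'; have := arity_gt0 r' => /= ? ?; lia.
Qed.

Lemma getc_col t x y : getc (mk (arity t) (col t)) x y = col t x y.
Proof. rewrite getc_mk; case: ifP => // H; by rewrite col_off // H. Qed.

Lemma comp_col t i s : 1 <= i <= arity t ->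
  Defs.comp (mk (arity t) (col t)) i (mk (arity s) (col s)) = mk (arity (graft t i s)) (col (graft t i s)).
Proof.
move=> Hi; rewrite comp_mk /= arity_graft //; apply: mk_ext => a b _.
by rewrite col_graft // /compf !getc_col.
Qed.

Lemma gen_col g : gen_bnc g = mk (arity (gtree g)) (col (gtree g)).
Proof. by case: g. Qed.

Lemma eval_col t : eval t = mk (arity t) (col t).
Proof.
elim: t => [|g l IHl r IHr].
  apply: mk_ext => a b; rewrite /is_arc /= => H; by have [-> ->] : a = 1 /\ b = 2 by lia.
rewrite /= IHl IHr gen_col comp_col //.
rewrite comp_col; last by rewrite arity_graft //=; have := arity_gt0 r; lia.
by [].
Qed.

Lemma eval_graft t i s : 1 <= i <= arity t -> eval (graft t i s) = Defs.comp (eval t) i (eval s).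
Proof. by move=> Hi; rewrite !eval_col comp_col. Qed.

Lemma bsize_eval t : bsize (eval t) = arity t.
Proof. by rewrite eval_col. Qed.

Lemma part1 x : gen_sub x <-> exists t : tree, eval t = x.
Proof.
split.
  elim=> [|||C D i _ [t <-] _ [s <-] Hi].
  - by exists Leaf.
  - by exists P; rewrite eval_col.
  - by exists Cg; rewrite eval_col.
  rewrite bsize_eval in Hi.
  by exists (graft t i s); rewrite eval_graft.
move=> [t <-]; elim: t => [|g l IHl r IHr] /=.
  exact: gs_unit.
apply: gs_comp => //.
  apply: gs_comp => //; last by rewrite /=; case: g.
  by case: g; [exact: gs_p | exact: gs_c].
rewrite comp_mk /=; have := bsize_eval r; have := arity_gt0 r; case: g => /=; lia.
Qed.

Lemma cong_eval t t' : cong t t' -> eval t = eval t'.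
Proof.
elim=> [||t0|t0 t1 _ ->|t0 t1 t2 _ -> _ ->|t1 t1' s s' i _ E1 _ E2 Hi] //;
  try by rewrite !eval_col.
rewrite !eval_graft // ?E1 ?E2 //.
by rewrite -bsize_eval -E1 bsize_eval.
Qed.

Lemma cong_node g l l' r r' : cong l l' -> cong r r' -> cong (Node g l r) (Node g l' r').
Proof.
move=> Hl Hr.
have E : forall x y, Node g x y = graft (graft (gtree g) 2 y) 1 x by [].
rewrite (E l r) (E l' r').
have H1 : cong (graft (gtree g) 2 r) (graft (gtree g) 2 r') by apply: cong_comp => //; exact: cong_refl.
apply: (cong_comp H1 Hl).
by rewrite arity_graft //=; have := arity_gt0 r; lia.
Qed.

Lemma subst4 X Y a b e d : cong X Y -> arity X = 4 ->
  cong (graft (graft (graft (graft X 4 d) 3 e) 2 b) 1 a)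
       (graft (graft (graft (graft Y 4 d) 3 e) 2 b) 1 a).
Proof.
move=> H HX.
have := arity_gt0 d; have := arity_gt0 e; have := arity_gt0 b => ? ? ?.
have H4 := cong_comp H (cong_refl d) (_ : 1 <= 4 <= arity X).
have H3 := cong_comp (H4 ltac:(lia)) (cong_refl e) (_ : 1 <= 3 <= arity (graft X 4 d)).
have H2 := cong_comp (H3 ltac:(rewrite arity_graft; lia)) (cong_refl b) (_ : 1 <= 2 <= _).
apply: cong_comp; last by rewrite !arity_graft; lia.
  apply: H2; rewrite !arity_graft; lia.
exact: cong_refl.
Qed.

Lemma rule g a b e d :
  cong (Node g (Node gc a (Node gp b e)) d) (Node g a (Node gp (Node gc b e) d)).
Proof.
case: g.
  by have := subst4 a b e d (cong_sym cong_rel2) erefl.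
by have := subst4 a b e d (cong_sym cong_rel1) erefl.
Qed.

Definition bad x := if x is Node gc _ (Node gp _ _) then true else false.
Fixpoint normal t := if t is Node _ l r then [&& normal l, normal r & ~~ bad l] else true.
Fixpoint mu t := if t is Node _ l r then arity l + mu l + mu r else 0.

Lemma nf_step t : ~~ normal t -> exists t', [/\ cong t t', arity t' = arity t & mu t' < mu t].
Proof.
elim: t => [|g l IHl r IHr] //=.
case Hl: (normal l) => /=.
  case Hr: (normal r) => /=.
    case: l IHl Hl => [|[] a [|[] b e]] //= _ _ _.
    exists (Node g a (Node gp (Node gc b e) r)); split => //=; first exact: rule.
      lia.
    have := arity_gt0 a; lia.
  case: (IHr (negbT Hr)) => r' [H1 H2 H3].
  exists (Node g l r'); split => /=; [exact: cong_node (cong_refl _) H1|lia|lia].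
case: (IHl (negbT Hl)) => l' [H1 H2 H3].
exists (Node g l' r); split => /=; [exact: cong_node H1 (cong_refl _)|lia|lia].
Qed.

Lemma nf_ex t : exists u, normal u /\ cong t u.
Proof.
elim: {t}(mu t).+1 {-2}t (ltnSn (mu t)) => // k IH t Hk.
case Ht: (normal t); first by exists t; split => //; exact: cong_refl.
case: (nf_step (negbT Ht)) => t' [H1 H2 H3].
case: (IH t'); first lia.
move=> u [Hu Hc]; exists u; split => //; exact: cong_trans H1 Hc.
Qed.


Lemma L1 (g : gen) (l r : tree) a b : b <= (arity l).+1 -> col (Node g l r) a b = col l a b.
Proof.
move=> Hb; have := arity_gt0 l; have := arity_gt0 r => ? ?.
rewrite /= /is_arc; go; fin a b.
Qed.

Lemma L2 (g : gen) (l r : tree) a b : 1 <= a -> (a != 1) || (b != (arity r).+1) -> col (Node g l r) (a + arity l) (b + arity l) = col r a b.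
Proof.
move=> Ha Hab; have := arity_gt0 l; have := arity_gt0 r => ? ?.
rewrite /= /is_arc; go; fin a b.
Qed.

Lemma L3 (g : gen) (l r : tree) : col (Node g l r) (arity l).+1 (arity l + arity r).+1 = if col r 1 (arity r).+1 == cU then cR else cU.
Proof.
have := arity_gt0 l; have := arity_gt0 r => ? ?.
rewrite /= /is_arc; go; done.
Qed.

Lemma L4 (g : gen) (l r : tree) : col (Node g l r) 1 (arity l + arity r).+1 = gcol g.
Proof.
have := arity_gt0 l; have := arity_gt0 r => ? ?.
rewrite /= /is_arc; go; done.
Qed.
Arguments L4 : clear implicits.


Lemma L5 (g : gen) (l r : tree) a b : col (Node g l r) a b != cU -> (a != 1) || (b != (arity l + arity r).+1) ->
  b <= (arity l).+1 \/ (arity l).+1 <= a.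
Proof.
move=> H1 H2; case: (leqP b (arity l).+1) => ?; [by left|].
case: (leqP (arity l).+1 a) => ?; [by right|].
move: H1; rewrite /= /is_arc; go; done.
Qed.
Set Implicit Arguments.

Fixpoint fs t := if t is Node _ l _ then (if l is Node gc _ _ then fs l else arity l) else 0.

Lemma colnU_arc t a b : col t a b != cU -> [&& 1 <= a, a < b & b <= (arity t).+1].
Proof. by apply: contraR => H; rewrite col_off. Qed.

Lemma fs_prop t : 2 <= arity t -> [/\ 1 <= fs t, fs t < arity t, col t 1 (fs t).+1 = cB &
  forall w, w <= arity t -> col t 1 w != cU -> w <= (fs t).+1].
Proof.
elim: t => [|g l IHl r _] // _.
move: (arity_gt0 l) (arity_gt0 r) => Hl0 Hr0.
have HL5 : forall w, w <= arity l + arity r -> col (Node g l r) 1 w != cU -> w <= (arity l).+1.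
  move=> w Hw H; case: (L5 H) => //; [apply/orP; right; lia | lia].
rewrite (_ : arity (Node g l r) = arity l + arity r) //.
case: l IHl HL5 Hl0 => [|g' l1 l2] IHl HL5 Hl0.
- have -> : fs (Node g Leaf r) = 1 by [].
  rewrite (_ : arity Leaf = 1) //; split; [done|lia|by rewrite L1|exact: HL5].
case: g' IHl HL5 Hl0 => IHl HL5 Hl0.
- have -> : fs (Node g (Node gp l1 l2) r) = arity (Node gp l1 l2) by [].
  split; [lia|lia|by rewrite L1 // L4|exact: HL5].
have -> : fs (Node g (Node gc l1 l2) r) = fs (Node gc l1 l2) by [].
have [H1 H2 H3 H4] := IHl ltac:(rewrite (_ : arity (Node gc l1 l2) = arity l1 + arity l2) //; have := arity_gt0 l1; have := arity_gt0 l2; lia).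
split; [lia|lia|rewrite L1 //; lia|].
move=> w Hw H; have := HL5 w Hw H => Hw'.
case: (ltngtP w (arity (Node gc l1 l2)).+1) => Hw2.
- apply: H4; first lia.
  by rewrite -(@L1 g _ r) //; lia.
- lia.
by move: H; rewrite Hw2 L1 // L4.
Qed.

Definition isp x := if x is Node gp _ _ then true else false.
Fixpoint iscomb x := if x is Node gc a b then iscomb a && ~~ isp b else true.

Lemma normal_comb x : normal x -> ~~ bad x -> iscomb x.
Proof.
elim: x => [|[] a IHa b _] //= /and3P [Ha Hb Hab] Hx.
rewrite IHa //=; by case: b Hx {Hb} => [|[]].
Qed.

Lemma combV c v : iscomb c -> 1 < v -> v < (arity c).+1 ->
 (exists a b, [/\ a < v, v < b & col c a b != cU]) \/
 (exists u, [/\ v < u <= (arity c).+1, (forall w, col c v w != cU -> w <= u),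
    col c v u != cB & (v.+1 < u -> col c v u = cR)]).
Proof.
elim: c v => [|g l IHl r _] v.
  by rewrite (_ : arity Leaf = 1) //; lia.
rewrite (_ : arity (Node g l r) = arity l + arity r) //.
move: (arity_gt0 l) (arity_gt0 r) => Hl0 Hr0.
case: g => Hc Hv1 Hv2.
  left; exists 1, (arity l + arity r).+1; split => //; rewrite L4 //.
move: Hc; rewrite [iscomb _]/= => /andP [Hl Hr].
case: (ltngtP v (arity l).+1) => Hv.
- case: (IHl v Hl Hv1 Hv) => [[a [b [H1 H2 H3]]]|[u [H1 H2 H3 H4]]].
    left; exists a, b; split => //.
    have := colnU_arc H3 => /and3P [_ _ Hb].
    by rewrite L1.
  right; exists u; split => //.
  + lia.
  + move=> w Hw; case: (L5 Hw); [apply/orP; left; lia| |lia] => Hw'.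
    by apply: H2; rewrite -(@L1 gc l r).
  + by rewrite L1 //; lia.
  + by move=> ?; rewrite L1 ?H4 //; lia.
- left; exists (arity l).+1, (arity l + arity r).+1; split; [lia|lia|].
  case: r Hr Hr0 Hv Hv2 IHl => [|[] r1 r2] Hr Hr0 Hv Hv2 _.
  - move: Hv Hv2; rewrite (_ : arity Leaf = 1) //; lia.
  - by move: Hr.
  by rewrite L3 (L4 gc r1 r2).
right; exists (arity l + arity r).+1; split => //.
- lia.
- move=> w /colnU_arc /and3P [_ _]; rewrite (_ : arity (Node gc l r) = arity l + arity r) //.
- rewrite Hv L3; by case: ifP.
rewrite Hv L3 => Hu.
case: r Hr Hr0 Hu IHl Hv Hv2 => [|[] r1 r2] Hr Hr0 Hu _ Hv Hv2.
- move: Hu; rewrite (_ : arity Leaf = 1) //; lia.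
- by move: Hr.
by rewrite (L4 gc r1 r2).
Qed.

Lemma noless g l r g' l' r' : normal (Node g' l' r') -> arity l + arity r = arity l' + arity r' ->
  (forall a b, col (Node g l r) a b = col (Node g' l' r') a b) -> arity l < arity l' -> False.
Proof.
move=> Hn Ha Hc Hlt.
move: (arity_gt0 l) (arity_gt0 r) (arity_gt0 l') (arity_gt0 r') => ? ? ? ?.
have Hcomb : iscomb l'.
  by move: Hn => /= /and3P [H1 _ H3]; apply: normal_comb.
have Hr2 : 2 <= arity r by lia.
set v := (arity l).+1.
case: (combV Hcomb (_ : 1 < v) (_ : v < (arity l').+1)); [lia|lia| |].
  move=> [a [b [H1 H2 H3]]].
  have := colnU_arc H3 => /and3P [_ _ Hb].
  have : col (Node g l r) a b != cU by rewrite Hc L1.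
  move=> /L5 H; case: H; [apply/orP; right; lia|rewrite /v; lia|rewrite /v; lia].
move=> [u [/andP [Hu1 Hu2] Hw Hub Hur]].
have [F1 F2 F3 F4] := fs_prop Hr2.
set w := ((fs r).+1 + arity l).
have Ew : col (Node g l r) v w = cB.
  by rewrite /v /w -add1n L2 //; apply/orP; right; lia.
have Ew' : col (Node g' l' r') v w = cB by rewrite -Hc.
have Hw1 : w <= (arity l').+1.
  have : col (Node g' l' r') v w != cU by rewrite Ew'.
  move=> /L5 H; case: H; [apply/orP; left; rewrite /v; lia|done|rewrite /v; lia].
have Ew2 : col l' v w = cB by rewrite -(@L1 g' l' r').
have Hwu : w <= u by apply: Hw; rewrite Ew2.
have Hwu' : w != u by apply/eqP => E; move: Hub; rewrite -E Ew2.
have Hvu : v.+1 < u by rewrite /v /w in Hwu Hwu' *; lia.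
have Eu : col (Node g l r) v u = cR by rewrite Hc L1 // Hur.
have Eu2 : col r 1 (u - arity l) = cR.
  rewrite -(@L2 g l r); [|lia|apply/orP; right; lia].
  by rewrite (_ : 1 + arity l = v) ?subnK //; rewrite /v; lia.
have := F4 (u - arity l) ltac:(lia) ltac:(by rewrite Eu2).
rewrite /w /v in Hwu Hwu' Hvu Hu1 *; lia.
Qed.

Lemma inj t t' : normal t -> normal t' -> arity t = arity t' ->
  (forall a b, col t a b = col t' a b) -> t = t'.
Proof.
elim: t t' => [|g l IHl r IHr] [|g' l' r'] //.
- move=> _ _ /= H; have := arity_gt0 l'; have := arity_gt0 r'; lia.
- move=> _ _ /= H; have := arity_gt0 l; have := arity_gt0 r; lia.
move=> Hn Hn' Ha Hc.
have Hn1 := Hn; have Hn1' := Hn'.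
move: Hn1 Hn1' => /= /and3P [Hl Hr _] /and3P [Hl' Hr' _].
move: Ha; rewrite (_ : arity (Node g l r) = arity l + arity r) //.
rewrite (_ : arity (Node g' l' r') = arity l' + arity r') // => Ha.
have Eg : g = g'.
  have := Hc 1 (arity l + arity r).+1; rewrite L4 Ha L4.
  by case: (g); case: (g').
have El : arity l = arity l'.
  case: (ltngtP (arity l) (arity l')) => // H.
    by case: (noless Hn' Ha Hc H).
  by case: (noless Hn (esym Ha) (fun a b => esym (Hc a b)) H).
have Er : arity r = arity r' by lia.
have -> : l = l'.
  apply: IHl => // a b.
  case: (leqP b (arity l).+1) => Hb.
    by rewrite -(@L1 g l r) // Hc L1 // -El.
  rewrite !col_off' //; lia.
have -> : r = r'.
  apply: IHr => // a b.
  case: (posnP a) => Ha0.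
    rewrite !col_off' //; lia.
  case: (boolP ((a != 1) || (b != (arity r).+1))) => Hab.
    rewrite -(@L2 g l r) // Hc El L2 //; by rewrite -Er.
  move: Hab; rewrite negb_or !negbK => /andP [/eqP -> /eqP ->].
  rewrite {2}Er.
  have := Hc (arity l).+1 (arity l + arity r).+1.
  rewrite L3 Ha El L3.
  by case/orP: (base_BU r) => /eqP ->; case/orP: (base_BU r') => /eqP ->.
by rewrite Eg.
Qed.

Theorem theorem3p12 :
  (forall x : bnc, gen_sub x <-> exists t : tree, eval t = x) /\
  (forall t t' : tree, eval t = eval t' <-> cong t t').
Proof.
split; first exact: part1.
move=> t t'; split; last exact: cong_eval.
move=> E.
case: (nf_ex t) => u [Hu Htu]; case: (nf_ex t') => u' [Hu' Htu'].
have Euu : eval u = eval u' by rewrite -(cong_eval Htu) -(cong_eval Htu').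
have Eu : u = u'.
  apply: inj => //; first by rewrite -!bsize_eval Euu.
  by move=> a b; rewrite -getc_col -eval_col Euu eval_col getc_col.
subst u'.
exact: cong_trans Htu (cong_sym Htu').
Qed.
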